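(* Let $(X,d)$ be a metric space, $M>0$, $\delta>0$, $f:X\to[0,M]$ a function, $g:X\to[0,\infty)$ a continuous bounded function, and $A\subset X$ a closed set. Define $$\tilde f(x)=\min\Big\{M,\ \inf_{(p_0,\dots,p_n)\in\mathcal{P}(\delta,A,x)} f(p_0)+\sum_{k=0}^{n-1}g(p_k)d(p_k,p_{k+1})\Big\}.$$ Then: (A) $\tilde f:X\to[0,M]$; (B) for each $x\in A$, $0\le\tilde f(x)\le f(x)$; (C) if $x\in A$ and $f(x)=0$ then $\tilde f(x)=0$; (D) for all $x,y\in X$ with $d(x,y)\le\delta$, $|\tilde f(x)-\tilde f(y)|\le\max\{g(x),g(y)\}d(x,y)$; (E) $\mathrm{lip}_a[\tilde f](x)\le g(x)$ for every $x\in X$; (F) $\tilde f$ is $\max\{M\delta^{-1},\sup_{x\in X}g(x)\}$-Lipschitz.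
   Context: A discrete path is a finite sequence $P=(p_0,\dots,p_n)$ of points of $X$ with $n\ge1$; its mesh is $\max_{0\le k\le n-1}d(p_k,p_{k+1})$. For $x\in X$, $\mathcal{P}(\delta,A,x)$ is the set of discrete paths $(p_0,\dots,p_n)$ with mesh at most $\delta$, $p_0\in A$ and $p_n=x$ (the infimum over the empty set is $+\infty$). $\mathrm{lip}_a[h](x)=\lim_{r\to0}\sup_{a\ne b\in B(x,r)}\frac{|h(a)-h(b)|}{d(a,b)}$, and $\mathrm{lip}_a[h](x)=0$ if $x$ is isolated. *)

(* Defs.v *)
From HB Require Import structures.
From mathcomp Require Import all_boot all_order all_algebra.
From mathcomp Require Import all_classical all_reals all_analysis.
Set Implicit Arguments. Unset Strict Implicit. Unset Printing Implicit Defensive.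
Import Order.TTheory GRing.Theory Num.Theory.
Local Open Scope classical_set_scope.
Local Open Scope ring_scope.

Section Defs.
Variables (R : realType) (X : Type) (d : X -> X -> R).

Definition is_metric : Prop :=
  [/\ forall x, d x x = 0,
      forall x y, d x y = 0 -> x = y,
      forall x y, d x y = d y x
    & forall x y z, d x z <= d x y + d y z].

Definition metric_continuous (h : X -> R) : Prop :=
  forall x (eps : R), 0 < eps ->
    exists2 eta : R, 0 < eta & forall y, d x y < eta -> `|h x - h y| < eps.

Definition metric_closed (A : set X) : Prop :=
  forall x, (forall eps : R, 0 < eps -> exists a, A a /\ d x a < eps) -> A x.

Definition discrete_path (delta : R) (A : set X) (x : X) (n : nat) (p : nat -> X) :=
  [/\ (1 <= n)%N, forall k, (k < n)%N -> d (p k) (p k.+1) <= delta, A (p 0%N) & p n = x].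

Definition path_cost (f g : X -> R) (n : nat) (p : nat -> X) : R :=
  f (p 0%N) + \sum_(k < n) g (p k) * d (p k) (p k.+1).

(* ftilde(x) = min{M, inf over P(delta,A,x) of the cost}, inf of empty set = +oo *)
Definition ftilde (M delta : R) (A : set X) (f g : X -> R) (x : X) : R :=
  fine (mine M%:E
    (ereal_inf [set c : \bar R | exists n p,
                  discrete_path delta A x n p /\ c = (path_cost f g n p)%:E])).

Definition isolated (x : X) : Prop :=
  exists2 r : R, 0 < r & forall a, d x a < r -> a = x.

(* asymptotic Lipschitz constant:
   lim_{r->0} sup_{a<>b in B(x,r)} |h a - h b| / d(a,b); the function of r is
   nonincreasing, so the limit as r -> 0+ is the infimum over r > 0.
   Value 0 at isolated points. *)
Definition lip_a (h : X -> R) (x : X) : \bar R :=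
  if `[< isolated x >] then 0%E else
  ereal_inf [set s : \bar R | exists2 r : R, 0 < r &
     s = ereal_sup [set q : \bar R | exists a b,
            [/\ a <> b, d x a < r, d x b < r & q = (`|h a - h b| / d a b)%:E]]].

End Defs.

(* Main.v *)
Require Import Defs.
From HB Require Import structures.
From mathcomp Require Import all_boot all_order all_algebra.
From mathcomp Require Import all_classical all_reals all_analysis.
From mathcomp Require Import lra.
Import Order.TTheory GRing.Theory Num.Theory.
Local Open Scope classical_set_scope.
Local Open Scope ring_scope.

Section L.
Variables (R : realType) (X : Type) (d : X -> X -> R) (M delta : R) (f g : X -> R) (A : set X).
Hypotheses (hd : is_metric d) (hM : 0 < M) (hdel : 0 < delta)
  (hf : forall x, 0 <= f x <= M) (hg : forall x, 0 <= g x).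

Lemma d_ge0 x y : 0 <= d x y.
Proof.
case: hd => d0 _ dsym dtri; have := dtri x y x; rewrite d0 (dsym y x) => h; lra.
Qed.

Lemma cost_ge0 n p : 0 <= path_cost d f g n p.
Proof.
rewrite /path_cost; apply: addr_ge0; first by case/andP: (hf (p 0%N)).
apply: sumr_ge0 => k _; apply: mulr_ge0 => //; exact: d_ge0.
Qed.

Definition Sx x := [set c : \bar R | exists n p,
   discrete_path d delta A x n p /\ c = (path_cost d f g n p)%:E].

Lemma I_ge0 x : (0 <= ereal_inf (Sx x))%E.
Proof.
apply: le_ereal_inf_tmp => c [n [p [_ ->]]]; rewrite lee_fin; exact: cost_ge0.
Qed.

Lemma ftE x : mine M%:E (ereal_inf (Sx x)) = (ftilde d M delta A f g x)%:E /\
   0 <= ftilde d M delta A f g x <= M.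
Proof.
have h0 := I_ge0 x; rewrite /ftilde -/(Sx x).
move: h0; case: (ereal_inf (Sx x)) => [r| |] h0 //=.
  rewrite lee_fin in h0.
  rewrite -EFin_min /=; split => //; apply/andP; split.
    by rewrite le_min (ltW hM).
  by rewrite ge_min lexx.
have -> : mine M%:E +oo%E = M%:E by rewrite /Order.min ltey.
by split => //; rewrite lexx (ltW hM).
Qed.


Notation ft := (ftilde d M delta A f g).

Lemma ft_path x n p : discrete_path d delta A x n p -> ft x <= path_cost d f g n p.
Proof.
move=> hp; have [e _] := ftE x; rewrite -lee_fin -e.
rewrite ge_min; apply/orP; right.
by apply: ereal_inf_lbound; exists n, p.
Qed.

Lemma ft_approx y eps : ft y < M -> 0 < eps ->
  exists n p, discrete_path d delta A y n p /\ path_cost d f g n p < ft y + eps.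
Proof.
move=> hy he; have [e _] := ftE y.
have hI : ereal_inf (Sx y) = (ft y)%:E.
  move: e; rewrite /Order.min; case: ifP => // _ h.
  by move: hy; rewrite -lte_fin -h ltxx.
have : (ereal_inf (Sx y) < (ft y + eps)%:E)%E by rewrite hI lte_fin ltrDl.
case/ereal_inf_lt => c [n [p [hp ->]]]; rewrite lte_fin => hc.
by exists n, p.
Qed.

Definition ext (p : nat -> X) n x := fun k => if (k <= n)%N then p k else x.

Lemma ext_path x y n p : d y x <= delta -> discrete_path d delta A y n p ->
  discrete_path d delta A x n.+1 (ext p n x) /\
  path_cost d f g n.+1 (ext p n x) = path_cost d f g n p + g y * d y x.
Proof.
move=> hyx [h1 hk hA hn]; split.
  split => //.
  - move=> k; rewrite ltnS leq_eqVlt => /orP[/eqP ->|kn].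
      by rewrite /ext leqnn ltnn hn.
    by rewrite /ext (ltnW kn) kn; exact: hk.
  - by rewrite /ext ltnn.
rewrite /path_cost big_ord_recr /= addrA; congr (_ + _ + _).
  apply: eq_bigr => k _; rewrite /ext /=.
  by rewrite (ltnW (ltn_ord k)) (ltn_ord k).
by rewrite /ext leqnn ltnn hn.
Qed.

Lemma ft_step x y : d y x <= delta -> ft x <= ft y + g y * d y x.
Proof.
move=> hyx; have [_ /andP[hx0 hxM]] := ftE x; have [_ /andP[hy0 hyM]] := ftE y.
have hr : 0 <= g y * d y x by apply: mulr_ge0 => //; exact: d_ge0.
have [hyM'|hylt] := leP M (ft y).
  apply: le_trans hxM _; apply: le_trans hyM' _; rewrite lerDl //.
apply/ler_addgt0Pr => e he.
have [n [p [hp hc]]] := ft_approx _ _ hylt he.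
have [hq hcq] := ext_path _ _ _ _ hyx hp.
apply: le_trans (ft_path _ _ _ hq) _; rewrite hcq; lra.
Qed.


Lemma dsym x y : d x y = d y x.
Proof. by case: hd. Qed.

Lemma ft_D x y : d x y <= delta -> `|ft x - ft y| <= Num.max (g x) (g y) * d x y.
Proof.
move=> hxy.
have h1 := ft_step x y; rewrite dsym in hxy; have {}h1 := h1 hxy.
rewrite -dsym in hxy; have h2 := ft_step y x hxy.
have hd0 := d_ge0 x y.
have m1 : g y * d x y <= Num.max (g x) (g y) * d x y.
  by apply: ler_wpM2r => //; rewrite le_max lexx orbT.
have m2 : g x * d x y <= Num.max (g x) (g y) * d x y.
  by apply: ler_wpM2r => //; rewrite le_max lexx.
rewrite dsym in h1.
rewrite ler_norml; apply/andP; split; lra.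
Qed.

Lemma ft_B x : A x -> ft x <= f x.
Proof.
move=> hx; have hp : discrete_path d delta A x 1 (fun _ => x).
  split => //; move=> k _; case: hd => d0 _ _ _; rewrite d0; exact: ltW.
have := ft_path _ _ _ hp; rewrite /path_cost big_ord1.
by case: hd => d0 _ _ _; rewrite d0 mulr0 addr0.
Qed.

End L.

Theorem lemma2p4 (R : realType) (X : Type) (d : X -> X -> R)
  (M delta : R) (f g : X -> R) (A : set X) :
  is_metric d -> 0 < M -> 0 < delta ->
  (forall x, 0 <= f x <= M) ->
  (forall x, 0 <= g x) -> metric_continuous d g ->
  (exists C : R, forall x, g x <= C) ->
  metric_closed d A ->
  let ft := ftilde d M delta A f g in
  (forall x, 0 <= ft x <= M) /\
  (forall x, A x -> 0 <= ft x <= f x) /\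
  (forall x, A x -> f x = 0 -> ft x = 0) /\
  (forall x y, d x y <= delta ->
          `|ft x - ft y| <= Num.max (g x) (g y) * d x y) /\
  (forall x, (lip_a d ft x <= (g x)%:E)%E) /\
  (forall x y, `|ft x - ft y| <= Num.max (M / delta) (sup (range g)) * d x y).
Proof.
move=> hd hM hdel hf hg hgc [C hC] hA ft.
have hE x : 0 <= ft x <= M by case: (@ftE _ _ _ _ delta _ _ A hd hM hf hg x).
have hBx x : A x -> 0 <= ft x <= f x.
  by move=> ax; have /andP[h0 _] := hE x; rewrite h0 (@ft_B _ _ _ _ _ _ _ A hd hM hdel hf hg x ax).
have hDx := @ft_D _ _ _ _ delta _ _ A hd hM hf hg.
split; first exact: hE. split; first exact: hBx. split.
  move=> x ax fx0; apply/eqP; rewrite eq_le; have /andP[h0 h1] := hBx x ax.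
  by rewrite h0 andbT -fx0.
split => //; split.
  move=> x; rewrite /lip_a; case: ifP => _; first by rewrite lee_fin.
  apply/lee_addgt0Pr => e he.
  have [eta heta hc] := hgc x e he.
  set r := Num.min eta (delta / 2).
  have hr : 0 < r by rewrite lt_min heta divr_gt0.
  have hre : r <= eta by rewrite ge_min lexx.
  have hrd : r <= delta / 2 by rewrite ge_min lexx orbT.
  apply: ge_ereal_inf; exists (ereal_sup [set q : \bar R | exists a b,
            [/\ a <> b, d x a < r, d x b < r & q = (`|ft a - ft b| / d a b)%:E]]).
    by exists r.
  apply: ge_ereal_sup => _ [a [b [hab hxa hxb ->]]]; rewrite lee_fin.
  have htri : d a b <= d a x + d x b by case: hd.
  have hax : d a x = d x a by case: hd.
  have hab0 : 0 < d a b.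
    rewrite lt_neqAle (@d_ge0 _ _ _ hd) andbT; apply/eqP => h; apply: hab.
    by case: hd => _ h2 _ _; apply: h2.
  have hdab : d a b <= delta by lra.
  rewrite ler_pdivrMr //; apply: le_trans (hDx a b hdab) _.
  apply: ler_wpM2r; first exact: ltW.
  have ga : g a <= g x + e.
    have := hc a (lt_le_trans hxa hre); rewrite ltr_norml => /andP[h1 h2]; lra.
  have gb : g b <= g x + e.
    have := hc b (lt_le_trans hxb hre); rewrite ltr_norml => /andP[h1 h2]; lra.
  by rewrite ge_max ga gb.
move=> x y.
have hub : has_ubound (range g) by exists C => _ [z _ <-].
have gs z : g z <= sup (range g) by apply: ub_le_sup => //; exists z.
have hd0 := @d_ge0 _ _ _ hd x y.
have [hxy|hxy] := leP (d x y) delta.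
  apply: le_trans (hDx x y hxy) _; apply: ler_wpM2r => //.
  by rewrite le_max ge_max; apply/orP; right; rewrite ge_max !gs.
have hm : M / delta <= Num.max (M / delta) (sup (range g)) by rewrite le_max lexx.
apply: le_trans (ler_wpM2r hd0 hm).
have /andP[a0 a1] := hE x; have /andP[b0 b1] := hE y.
have hMd : M <= M / delta * d x y.
  rewrite mulrAC ler_pdivlMr // ler_pM2l //; exact: ltW.
rewrite ler_norml; apply/andP; split; lra.
Qed.
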